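(* Let $(A,\succ,\prec)$ be an anti-pre-Novikov algebra and $(V,l_{\succ},r_{\succ},l_{\prec},r_{\prec})$ a representation of it. Put $l_{\circ}=l_{\succ}+l_{\prec}$, $r_{\circ}=r_{\succ}+r_{\prec}$, $r_{\odot}=r_{\succ}+l_{\prec}$. Let $\hat A=A\oplus V^*$ with operations $(x+a^* )\succ(y+b^* )=x\succ y-(l_{\circ}^*+r_{\circ}^* )(x)b^*-r_{\succ}^*(y)a^*$ and $(x+a^* )\prec(y+b^* )=x\prec y+r_{\odot}^*(x)b^*+r_{\circ}^*(y)a^*$ ($x,y\in A$, $a^*,b^*\in V^*$); this is the semi-direct product anti-pre-Novikov algebra $A\ltimes V^*$ for the dual representation $(V^*,-(l_{\circ}^*+r_{\circ}^* ),-r_{\succ}^*,r_{\odot}^*,r_{\circ}^* )$. Let $T:V\to A$ be linear, identified with $\sum_{i}T(v_i)\otimes v_i^*\in\hat A\otimes\hat A$ for a basis $\{v_i\}$ of $V$ with dual basis $\{v_i^*\}$. Then $s=T-\tau(T)$ is a (skew-symmetric) solution of the anti-pre-Novikov Yang–Baxter equation in $\hat A$ if and only if $T$ is an $\mathcal O$-operator on $(A,\succ,\prec)$ associated to $(V,l_{\succ},r_{\succ},l_{\prec},r_{\prec})$.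
   Context: An anti-pre-Novikov algebra is $(A,\succ,\prec)$ such that with $x\circ y=x\succ y+x\prec y$: $(x\circ y-y\circ x)\succ z=y\succ(x\succ z)-x\succ(y\succ z)$; $x\prec(y\circ z)=(y\succ x)\prec z-(x\prec y)\prec z-y\succ(x\prec z)$; $(x\circ y)\succ z=-(x\succ z)\prec y$; $(x\prec y)\prec z=(x\prec z)\prec y$; $(x\circ y-y\circ x)\prec z=x\succ(y\circ z)-y\succ(x\circ z)$. A representation of it is $(V,l_{\succ},r_{\succ},l_{\prec},r_{\prec})$ ($V$ finite-dimensional, maps $A\to\mathrm{End}(V)$) such that, with $l_{\circ}=l_{\succ}+l_{\prec}$, $r_{\circ}=r_{\succ}+r_{\prec}$: $l_{\succ}(x\circ y-y\circ x)=l_{\succ}(y)l_{\succ}(x)-l_{\succ}(x)l_{\succ}(y)$; $r_{\prec}(x\circ y)=r_{\prec}(y)l_{\succ}(x)-r_{\prec}(y)r_{\prec}(x)-l_{\succ}(x)r_{\prec}(y)$; $l_{\succ}(x\circ y)=-r_{\prec}(y)l_{\succ}(x)$; $l_{\prec}(x\prec y)=r_{\prec}(y)l_{\prec}(x)$; $l_{\prec}(x\circ y-y\circ x)=l_{\succ}(x)l_{\circ}(y)-l_{\succ}(y)l_{\circ}(x)$; $r_{\succ}(x)(l_{\circ}(y)-r_{\circ}(y))=r_{\succ}(y\succ x)-l_{\succ}(y)r_{\succ}(x)$; $l_{\prec}(x)l_{\circ}(y)=l_{\prec}(y\succ x)-l_{\prec}(x\prec y)-l_{\succ}(y)l_{\prec}(x)$;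 $r_{\prec}(x)(l_{\circ}(y)-r_{\circ}(y))=l_{\succ}(y)r_{\circ}(x)-r_{\succ}(y\circ x)$; $r_{\succ}(x)l_{\circ}(y)=-l_{\prec}(y\succ x)$; $r_{\prec}(x)r_{\prec}(y)=r_{\prec}(y)r_{\prec}(x)$; $l_{\prec}(x)r_{\circ}(y)=r_{\prec}(y)r_{\succ}(x)-r_{\prec}(y)l_{\prec}(x)-r_{\succ}(x\prec y)$; $r_{\succ}(x)r_{\circ}(y)=-r_{\prec}(y)r_{\succ}(x)$. For $f:A\to\mathrm{End}(V)$, $\langle f^*(x)u^*,v\rangle=-\langle u^*,f(x)v\rangle$. $\tau$ is the flip of tensor factors. An $\mathcal O$-operator on $(A,\succ,\prec)$ associated to $(V,l_{\succ},r_{\succ},l_{\prec},r_{\prec})$ is a linear $T:V\to A$ with $T(u)\succ T(v)=T(l_{\succ}(T(u))v+r_{\succ}(T(v))u)$ and $T(u)\prec T(v)=T(l_{\prec}(T(u))v+r_{\prec}(T(v))u)$. For an anti-pre-Novikov algebra $B$ with $x\odot y=x\succ y+y\prec x$, $s=\sum_i a_i\otimes b_i\in B\otimes B$ solves the anti-pre-Novikov Yang–Baxter equation if $\sum_{i,j}a_i\circ a_j\otimes b_i\otimes b_j+\sum_{i,j}a_j\otimes a_i\otimes(b_i\odot b_j)+\sum_{i,j}a_i\otimes(b_i\prec a_j)\otimes b_j=0$. *)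

(* Defs.v *)
From mathcomp Require Import all_boot all_algebra.
Set Implicit Arguments. Unset Strict Implicit. Unset Printing Implicit Defensive.
Import GRing.Theory.
Local Open Scope ring_scope.

Definition bilinear_op (K : fieldType) (A : lmodType K) (op : A -> A -> A) : Prop :=
  (forall x, linear (op x)) /\ (forall y, linear (fun x => op x y)).

Definition apn_circ (K : fieldType) (A : lmodType K) (succ prec : A -> A -> A)
  (x y : A) : A := succ x y + prec x y.

Definition apn_odot (K : fieldType) (A : lmodType K) (succ prec : A -> A -> A)
  (x y : A) : A := succ x y + prec y x.

Definition is_antiPreNovikov (K : fieldType) (A : lmodType K) (succ prec : A -> A -> A)
  : Prop :=
  let circ := apn_circ succ prec in
  [/\ bilinear_op succ, bilinear_op prec,
   forall x y z, succ (circ x y - circ y x) z = succ y (succ x z) - succ x (succ y z),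
   forall x y z, prec x (circ y z) = prec (succ y x) z - prec (prec x y) z - succ y (prec x z)
  & [/\ forall x y z, succ (circ x y) z = - prec (succ x z) y,
     (forall x y z, prec (prec x y) z = prec (prec x z) y)
     & (forall x y z, prec (circ x y - circ y x) z = succ x (circ y z) - succ y (circ x z))]].

Definition is_apn_rep (K : fieldType) (A V : vectType K) (succ prec : A -> A -> A)
  (ls rs lp rp : A -> 'End(V)) : Prop :=
  let circ := apn_circ succ prec in
  let lc := fun x => ls x + lp x in
  let rc := fun x => rs x + rp x in
  [/\ [/\ linear ls, linear rs, linear lp & linear rp],
   [/\ forall x y, ls (circ x y - circ y x) = (ls y \o ls x)%VF - (ls x \o ls y)%VF,
       forall x y, rp (circ x y) = (rp y \o ls x)%VF - (rp y \o rp x)%VF - (ls x \o rp y)%VF,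
       forall x y, ls (circ x y) = - (rp y \o ls x)%VF
     & forall x y, lp (prec x y) = (rp y \o lp x)%VF],
   [/\ forall x y, lp (circ x y - circ y x) = (ls x \o lc y)%VF - (ls y \o lc x)%VF,
       forall x y, (rs x \o (lc y - rc y))%VF = rs (succ y x) - (ls y \o rs x)%VF,
       forall x y, (lp x \o lc y)%VF = lp (succ y x) - lp (prec x y) - (ls y \o lp x)%VF
     & forall x y, (rp x \o (lc y - rc y))%VF = (ls y \o rc x)%VF - rs (circ y x)]
  & [/\ forall x y, (rs x \o lc y)%VF = - lp (succ y x),
        forall x y, (rp x \o rp y)%VF = (rp y \o rp x)%VF,
        forall x y, (lp x \o rc y)%VF = (rp y \o rs x)%VF - (rp y \o lp x)%VF - rs (prec x y)
      & forall x y, (rs x \o rc y)%VF = - (rp y \o rs x)%VF]].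

(* V^* := 'Hom(V, K^o);  <f^*(x) u^*, v> = - <u^*, f(x) v>, i.e. f^*(x) u^* = - u^* o f(x) *)
Definition dualV (K : fieldType) (V : vectType K) := 'Hom(V, K^o).

Definition dual_act (K : fieldType) (A V : vectType K) (f : A -> 'End(V)) (x : A)
  (u : dualV V) : dualV V := - (u \o f x)%VF.

Definition Ahat (K : fieldType) (A V : vectType K) := (A * dualV V)%type.

Definition hat_succ (K : fieldType) (A V : vectType K) (succ : A -> A -> A)
  (ls rs lp rp : A -> 'End(V)) (X Y : Ahat A V) : Ahat A V :=
  let lcrc := fun x => ls x + lp x + (rs x + rp x) in
  (succ X.1 Y.1, - dual_act lcrc X.1 Y.2 - dual_act rs Y.1 X.2).

Definition hat_prec (K : fieldType) (A V : vectType K) (prec : A -> A -> A)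
  (ls rs lp rp : A -> 'End(V)) (X Y : Ahat A V) : Ahat A V :=
  let rodot := fun x => rs x + lp x in
  let rc := fun x => rs x + rp x in
  (prec X.1 Y.1, dual_act rodot X.1 Y.2 + dual_act rc Y.1 X.2).

(* An element of B (x) B (x) B (B finite-dimensional) is identified with the
   trilinear form it induces on B^* x B^* x B^*; thus a finite sum
   sum_k a_k (x) b_k (x) c_k is zero iff sum_k f(a_k) g(b_k) h(c_k) = 0 for all
   linear functionals f, g, h on B.  A 2-tensor s = sum_i a_i (x) b_i is given
   by the list of pairs (a_i, b_i). *)
Definition APN_YBE (K : fieldType) (B : vectType K) (succ prec : B -> B -> B)
  (s : seq (B * B)) : Prop :=
  forall f g h : 'Hom(B, K^o),
    \sum_(p <- s) \sum_(q <- s)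
      ((f (apn_circ succ prec p.1 q.1) : K) * g p.2 * h q.2
       + (f q.1 : K) * g p.1 * h (apn_odot succ prec p.2 q.2)
       + (f p.1 : K) * g (prec p.2 q.1) * h q.2) = 0.

Definition is_O_operator (K : fieldType) (A V : vectType K) (succ prec : A -> A -> A)
  (ls rs lp rp : A -> 'End(V)) (T : 'Hom(V, A)) : Prop :=
  (forall u v, succ (T u) (T v) = T (ls (T u) v + rs (T v) u))
  /\ (forall u v, prec (T u) (T v) = T (lp (T u) v + rp (T v) u)).

Definition dual_basis (K : fieldType) (V : vectType K) (n : nat) (e : n.-tuple V)
  (i : 'I_n) : dualV V := linfun (coord e i : V -> K^o).

(* T viewed as sum_i T(v_i) (x) v_i^* in Ahat (x) Ahat, and s = T - tau(T) *)
Definition T_tensor (K : fieldType) (A V : vectType K) (T : 'Hom(V, A)) (n : nat)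
  (e : n.-tuple V) : seq (Ahat A V * Ahat A V) :=
  [seq ((T (tnth e i), 0), (0, dual_basis e i)) | i <- enum 'I_n].

Definition skew_T (K : fieldType) (A V : vectType K) (T : 'Hom(V, A)) (n : nat)
  (e : n.-tuple V) : seq (Ahat A V * Ahat A V) :=
  T_tensor T e ++ [seq (- p.2, p.1) | p <- T_tensor T e].

(* Main.v *)
Require Import Defs.
From HB Require Import structures.
From mathcomp Require Import all_boot all_algebra.
From mathcomp Require Import ring.
Set Implicit Arguments. Unset Strict Implicit. Unset Printing Implicit Defensive.
Import GRing.Theory.
Local Open Scope ring_scope.

Section Lin.
Variables (K : fieldType) (U W : lmodType K) (f : U -> W) (hf : linear f).
Lemma linD x y : f (x + y) = f x + f y.
Proof. by have := hf 1 x y; rewrite !scale1r. Qed.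
Lemma lin0 : f 0 = 0.
Proof. by apply: (addrI (f 0)); rewrite -linD !addr0. Qed.
Lemma linZ a x : f (a *: x) = a *: f x.
Proof. by have := hf a x 0; rewrite !addr0 lin0 addr0. Qed.
Lemma linN x : f (- x) = - f x.
Proof. by rewrite -scaleN1r linZ scaleN1r. Qed.
Lemma lin_sum I (r : seq I) (P : pred I) (F : I -> U) :
  f (\sum_(i <- r | P i) F i) = \sum_(i <- r | P i) f (F i).
Proof. exact: (big_morph f linD lin0). Qed.
End Lin.

Section Bil.
Variables (K : fieldType) (U W : lmodType K) (op : U -> U -> W) (hop : forall x, linear (op x))
  (hop2 : forall y, linear (fun x => op x y)).
Lemma bilDl x y z : op (x + y) z = op x z + op y z.
Proof. exact: (linD (hop2 z)). Qed.
Lemma bil0l z : op 0 z = 0.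
Proof. exact: (lin0 (hop2 z)). Qed.
Lemma bilZl a x z : op (a *: x) z = a *: op x z.
Proof. exact: (linZ (hop2 z)). Qed.
Lemma bilNl x z : op (- x) z = - op x z.
Proof. exact: (linN (hop2 z)). Qed.
Lemma bil_suml I (r : seq I) (P : pred I) (F : I -> U) z :
  op (\sum_(i <- r | P i) F i) z = \sum_(i <- r | P i) op (F i) z.
Proof. exact: (lin_sum (hop2 z)). Qed.
End Bil.

Lemma pairD (K : fieldType) (U W : lmodType K) (a c : U) (b d : W) : (a, b) + (c, d) = (a + c, b + d).
Proof. by []. Qed.
Lemma pairN (K : fieldType) (U W : lmodType K) (a : U) (b : W) : - (a, b) = (- a, - b).
Proof. by []. Qed.
Lemma pairZ (K : fieldType) (U W : lmodType K) k (a : U) (b : W) : k *: (a, b) = (k *: a, k *: b).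
Proof. by []. Qed.
Lemma pair0 (K : fieldType) (U W : lmodType K) : (0 : U * W) = (0, 0).
Proof. by []. Qed.

Lemma lin_hom (K : fieldType) (U W : vectType K) (f : U -> W) (hf : linear f) :
  exists F : 'Hom(U, W), forall u, F u = f u.
Proof.
pose flM := GRing.isLinear.Build _ _ _ _ f hf.
pose fL : {linear _ -> _} := HB.pack f flM.
by exists (linfun fL) => u; rewrite lfunE.
Qed.
Lemma fst_sum (K : fieldType) (U W : lmodType K) I (r : seq I) (P : pred I) (F : I -> U * W) :
  (\sum_(i <- r | P i) F i).1 = \sum_(i <- r | P i) (F i).1.
Proof. exact: (big_morph (fun p : U * W => p.1) (fun _ _ => erefl) (erefl _)). Qed.
Lemma snd_sum (K : fieldType) (U W : lmodType K) I (r : seq I) (P : pred I) (F : I -> U * W) :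
  (\sum_(i <- r | P i) F i).2 = \sum_(i <- r | P i) (F i).2.
Proof. exact: (big_morph (fun p : U * W => p.2) (fun _ _ => erefl) (erefl _)). Qed.

Section Main.
Variables (K : fieldType) (A V : vectType K).
Variables (T : 'Hom(V, A)) (e : (\dim (fullv : {vspace V})).-tuple V) (he : basis_of fullv e).
Local Notation n := (\dim (fullv : {vspace V})).
Local Notation c i u := (coord e i u).

Lemma expV v : v = \sum_i c i v *: tnth e i.
Proof.
rewrite {1}(coord_basis he (memvf v)); apply: eq_bigr => i _; by rewrite (tnth_nth 0).
Qed.

Lemma expT u : T u = \sum_i c i u *: T (tnth e i).
Proof. by rewrite {1}(expV u) linear_sum; apply: eq_bigr => i _; rewrite linearZ. Qed.

Lemma expD (b : dualV V) : b = \sum_i b (tnth e i) *: dual_basis e i.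
Proof.
apply/lfunP => v; rewrite sum_lfunE {1}(expV v) linear_sum; apply: eq_bigr => i _.
rewrite linearZ scale_lfunE lfunE /=; exact: mulrC.
Qed.

Definition uvec (f : 'Hom(Ahat A V, K^o)) : V := \sum_i f (0, dual_basis e i) *: tnth e i.
Definition fA (f : 'Hom(Ahat A V, K^o)) (x : A) : K := f (x, 0).

Lemma fV (f : 'Hom(Ahat A V, K^o)) (b : dualV V) : f (0, b) = b (uvec f).
Proof.
rewrite {1}(expD b) /uvec linear_sum.
have -> : (0 : A, \sum_i b (tnth e i) *: dual_basis e i) = \sum_i b (tnth e i) *: ((0 : A), dual_basis e i).
  rewrite [RHS]surjective_pairing fst_sum snd_sum /=.
  by congr (_, _); symmetry; apply: big1 => i _; exact: scaler0.
rewrite linear_sum /=; apply: eq_bigr => i _; rewrite !linearZ /=; exact: mulrC.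
Qed.


Lemma fsplit (f : 'Hom(Ahat A V, K^o)) p : f p = fA f p.1 + p.2 (uvec f).
Proof.
have E : p = (p.1, 0) + (0, p.2) by rewrite pairD addr0 add0r -surjective_pairing.
by rewrite {1}E linearD -fV.
Qed.

Definition Pe i : Ahat A V * Ahat A V := ((T (tnth e i), 0), (0, dual_basis e i)).
Definition Qe i : Ahat A V * Ahat A V := (- (0, dual_basis e i), (T (tnth e i), 0)).

Lemma sum_skew1 (G : Ahat A V * Ahat A V -> K) :
  \sum_(p <- skew_T T e) G p = \sum_i (G (Pe i) + G (Qe i)).
Proof.
rewrite /skew_T big_cat /= -map_comp !big_map big_split /=.
by rewrite [index_enum _]unlock.
Qed.

Lemma sum_skew (F : Ahat A V * Ahat A V -> Ahat A V * Ahat A V -> K) :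
  \sum_(p <- skew_T T e) \sum_(q <- skew_T T e) F p q =
  \sum_i \sum_j (F (Pe i) (Pe j) + F (Pe i) (Qe j) + F (Qe i) (Pe j) + F (Qe i) (Qe j)).
Proof.
rewrite sum_skew1; apply: eq_bigr => i _; rewrite !sum_skew1 -big_split /=.
by apply: eq_bigr => j _; rewrite !addrA.
Qed.

Variables (succ prec : A -> A -> A) (ls rs lp rp : A -> 'End(V)).
Hypotheses (Hs : bilinear_op succ) (Hp : bilinear_op prec).
Hypotheses (Hls : linear ls) (Hrs : linear rs) (Hlp : linear lp) (Hrp : linear rp).

Lemma s0r x : succ x 0 = 0. Proof. exact: (lin0 (Hs.1 x)). Qed.
Lemma s0l x : succ 0 x = 0. Proof. exact: (bil0l Hs.2). Qed.
Lemma p0r x : prec x 0 = 0. Proof. exact: (lin0 (Hp.1 x)). Qed.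
Lemma p0l x : prec 0 x = 0. Proof. exact: (bil0l Hp.2). Qed.
Lemma fA0 f : fA f 0 = 0. Proof. by rewrite /fA -pair0 linear0. Qed.
Lemma ls0 : ls 0 = 0. Proof. exact: lin0. Qed.
Lemma rs0 : rs 0 = 0. Proof. exact: lin0. Qed.
Lemma lp0 : lp 0 = 0. Proof. exact: lin0. Qed.
Lemma rp0 : rp 0 = 0. Proof. exact: lin0. Qed.

Definition hs := hat_succ succ ls rs lp rp.
Definition hp := hat_prec prec ls rs lp rp.
Definition Yf (f g h : 'Hom(Ahat A V, K^o)) (p q : Ahat A V * Ahat A V) : K :=
      ((f (apn_circ hs hp p.1 q.1) : K) * g p.2 * h q.2
       + (f q.1 : K) * g p.1 * h (apn_odot hs hp p.2 q.2)
       + (f p.1 : K) * g (hp p.2 q.1) * h q.2).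

Local Notation x i := (T (tnth e i)).
Local Notation a i := (dual_basis e i).


Lemma fA_lin (f : 'Hom(Ahat A V, K^o)) : linear (fA f : A -> K^o).
Proof.
move=> k a b; rewrite /fA.
have -> : ((k *: a + b, 0) : Ahat A V) = k *: (a, 0) + (b, 0) by rewrite pairZ pairD scaler0 addr0.
by rewrite linearP.
Qed.
Lemma fAD f a b : fA f (a + b) = fA f a + fA f b. Proof. exact: (linD (fA_lin f)). Qed.
Lemma fAN f a : fA f (- a) = - fA f a. Proof. exact: (linN (fA_lin f)). Qed.
Lemma fAZ f k a : fA f (k *: a) = k * fA f a. Proof. exact: (linZ (fA_lin f)). Qed.
Lemma fA_sum f I (r : seq I) (P : pred I) (F : I -> A) :
  fA f (\sum_(i <- r | P i) F i) = \sum_(i <- r | P i) fA f (F i).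
Proof. exact: (lin_sum (fA_lin f)). Qed.

Lemma TZ k v : T (k *: v) = k *: T v. Proof. exact: linearZ. Qed.
Lemma TD v w : T (v + w) = T v + T w. Proof. exact: linearD. Qed.
Lemma TN v : T (- v) = - T v. Proof. exact: linearN. Qed.
Lemma T_sum I (r : seq I) (P : pred I) (F : I -> V) :
  T (\sum_(i <- r | P i) F i) = \sum_(i <- r | P i) T (F i).
Proof. exact: linear_sum. Qed.

Lemma Calpha f (op : A -> A -> A) (Hop : bilinear_op op) u v :
  \sum_i \sum_j fA f (op (x i) (x j)) * (c i u * c j v) = fA f (op (T u) (T v)).
Proof.
rewrite (expT u) (bil_suml Hop.2) fA_sum; apply: eq_bigr => i _.
rewrite (bilZl Hop.2) fAZ (expT v) (lin_sum (Hop.1 _)) fA_sum big_distrr /=.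
apply: eq_bigr => j _; rewrite (linZ (Hop.1 _)) fAZ; ring.
Qed.

Lemma Calpha' f (op : A -> A -> A) (Hop : bilinear_op op) u v :
  \sum_i \sum_j fA f (op (x j) (x i)) * (c i u * c j v) = fA f (op (T v) (T u)).
Proof.
rewrite exchange_big -Calpha //; apply: eq_bigr => i _; apply: eq_bigr => j _; ring.
Qed.

Lemma Cbeta f (L : A -> 'End(V)) (HL : linear L) u v :
  \sum_i \sum_j fA f (x j) * (c i u * c j (L (x i) v)) = fA f (T (L (T u) v)).
Proof.
rewrite (expT u) (lin_sum HL) sum_lfunE T_sum fA_sum; apply: eq_bigr => i _.
rewrite (linZ HL) scale_lfunE TZ fAZ (expT (L (x i) v)) fA_sum big_distrr /=.
apply: eq_bigr => j _; rewrite fAZ; ring.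
Qed.

Lemma Cgamma f (L : A -> 'End(V)) (HL : linear L) u v :
  \sum_i \sum_j fA f (x i) * (c j v * c i (L (x j) u)) = fA f (T (L (T v) u)).
Proof. by rewrite exchange_big -Cbeta. Qed.

Ltac simp0 := rewrite /= ?s0r ?s0l ?p0r ?p0l ?ls0 ?rs0 ?lp0 ?rp0 ?oppr0 ?addr0 ?add0r
   ?comp_lfun0l ?comp_lfun0r ?oppr0 ?addr0 ?add0r ?opprK ?fA0 ?add0r ?addr0
   ?opp_lfunE ?add_lfunE ?comp_lfunE ?zero_lfunE ?lfunE /= ?linear0 ?linearD ?linearN /=
    ?mul0r ?mulr0 ?add0r ?addr0 ?oppr0 ?fAD ?fAN.
Ltac simp := rewrite /Yf /Pe /Qe /apn_circ /apn_odot /hs /hp /hat_succ /hat_prec /= ?pairN ?pairD /=;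
  rewrite ?fsplit /dual_act; do 3 simp0.


Definition Ds u v := succ (T u) (T v) - T (ls (T u) v + rs (T v) u).
Definition Dp u v := prec (T u) (T v) - T (lp (T u) v + rp (T v) u).

Lemma main_id f g h :
  \sum_(p <- skew_T T e) \sum_(q <- skew_T T e) Yf f g h p q =
  fA f (Ds (uvec g) (uvec h) + Dp (uvec g) (uvec h)) - fA g (Dp (uvec f) (uvec h))
  + fA h (Ds (uvec g) (uvec f) + Dp (uvec f) (uvec g)).
Proof.
rewrite sum_skew.
set uf := uvec f; set ug := uvec g; set uh := uvec h.
transitivity (\sum_i \sum_j (
   fA f (succ (x i) (x j)) * (c i ug * c j uh)
 + fA f (prec (x i) (x j)) * (c i ug * c j uh)
 - fA f (x i) * (c j uh * c i (rs (x j) ug))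
 - fA f (x i) * (c j uh * c i (rp (x j) ug))
 - fA h (x j) * (c i ug * c j (ls (x i) uf))
 - fA h (x j) * (c i ug * c j (rp (x i) uf))
 + fA g (x i) * (c j uf * c i (lp (x j) uh))
 + fA g (x i) * (c j uh * c i (rp (x j) uf))
 - fA f (x j) * (c i ug * c j (ls (x i) uh))
 - fA f (x j) * (c i ug * c j (lp (x i) uh))
 - fA g (prec (x i) (x j)) * (c i uf * c j uh)
 + fA h (succ (x i) (x j)) * (c i ug * c j uf)
 + fA h (prec (x j) (x i)) * (c i ug * c j uf)
 - fA h (x j) * (c i uf * c j (rs (x i) ug))
 - fA h (x j) * (c i uf * c j (lp (x i) ug)))).
  apply: eq_bigr => i _; apply: eq_bigr => j _; simp; ring.
under eq_bigr => i _ do rewrite !big_split /= !sumrN.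
rewrite !big_split /= !sumrN.
rewrite !(Calpha _ Hs) !(Calpha _ Hp) !(Calpha' _ Hp) !(Cbeta _ Hls) !(Cbeta _ Hrs) !(Cbeta _ Hlp)
  !(Cbeta _ Hrp) !(Cgamma _ Hrs) !(Cgamma _ Hlp) !(Cgamma _ Hrp).
rewrite /Ds /Dp !(fAD, fAN, TD).
ring.
Qed.
End Main.
Section S.
Variables (K : fieldType) (A V : vectType K).
Variables (T : 'Hom(V, A)) (e : (\dim (fullv : {vspace V})).-tuple V) (he : basis_of fullv e).
Variables (succ prec : A -> A -> A) (ls rs lp rp : A -> 'End(V)).
Hypotheses (Hs : bilinear_op succ) (Hp : bilinear_op prec).
Hypotheses (Hls : linear ls) (Hrs : linear rs) (Hlp : linear lp) (Hrp : linear rp).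
Definition Rhs f g h := fA f (Ds T succ ls rs (uvec e g) (uvec e h) + Dp T prec lp rp (uvec e g) (uvec e h)) - fA g (Dp T prec lp rp (uvec e f) (uvec e h))
  + fA h (Ds T succ ls rs (uvec e g) (uvec e f) + Dp T prec lp rp (uvec e f) (uvec e g)).
Lemma YBE_iff : APN_YBE (hat_succ succ ls rs lp rp) (hat_prec prec ls rs lp rp) (skew_T T e) <-> forall f g h, Rhs f g h = 0.
Proof.
split => H f g h.
  rewrite /Rhs -(main_id T he Hs Hp Hls Hrs Hlp Hrp f g h).
  exact: (H f g h).
move: (main_id T he Hs Hp Hls Hrs Hlp Hrp f g h).
rewrite -/(Rhs f g h) H.
by [].
Qed.
End S.

Lemma zero_by_functionals (K : fieldType) (A : vectType K) (w : A) :
  (forall phi : 'Hom(A, K^o), phi w = 0) -> w = 0.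
Proof.
move=> H; rewrite (coord_vbasis (memvf w)); apply: big1 => i _.
have := H (linfun (coord (vbasis fullv) i : A -> K^o)); rewrite lfunE /= => ->.
by rewrite scale0r.
Qed.

Unset Implicit Arguments.

Theorem mainTheorem8 (K : fieldType) (A V : vectType K) (succ prec : A -> A -> A)
  (ls rs lp rp : A -> 'End(V))
  (HA : is_antiPreNovikov succ prec) (HV : is_apn_rep succ prec ls rs lp rp)
  (T : 'Hom(V, A)) (e : (\dim (fullv : {vspace V})).-tuple V) (he : basis_of fullv e) :
  APN_YBE (hat_succ succ ls rs lp rp) (hat_prec prec ls rs lp rp) (skew_T T e)
  <-> is_O_operator succ prec ls rs lp rp T.
Proof.
case: HA => Hs Hp _ _ _; case: HV => [[Hls Hrs Hlp Hrp] _ _ _].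
apply: iff_trans (YBE_iff T he Hs Hp Hls Hrs Hlp Hrp) _.
split.
- move=> key.
  have evX u : exists F : 'Hom(Ahat A V, K^o), forall p, F p = (p.2 u : K^o).
    apply: lin_hom => k p q /=.
    by rewrite add_lfunE scale_lfunE.
  have phX (phi : 'Hom(A, K^o)) : exists F : 'Hom(Ahat A V, K^o), forall p, F p = phi p.1.
    apply: lin_hom => k p q /=.
    by rewrite linearP.
  have fAev (u : V) (F : 'Hom(Ahat A V, K^o)) (FE : forall p, F p = (p.2 u : K^o)) (y : A) : fA F y = 0 by rewrite /fA FE /= zero_lfunE.
  have uvec_ev (u : V) (F : 'Hom(Ahat A V, K^o)) (FE : forall p, F p = (p.2 u : K^o)) : uvec e F = u.
    rewrite /uvec [RHS](expV he); apply: eq_bigr => i _; by rewrite FE /= lfunE.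
  have fAph (phi : 'Hom(A, K^o)) (F : 'Hom(Ahat A V, K^o)) (FE : forall p, F p = phi p.1) (y : A) : fA F y = phi y by rewrite /fA FE.
  have uvec_ph (phi : 'Hom(A, K^o)) (F : 'Hom(Ahat A V, K^o)) (FE : forall p, F p = phi p.1) : uvec e F = 0.
    by rewrite /uvec big1 // => i _; rewrite FE /= linear0 scale0r.
  have HDp u v : Dp T prec lp rp u v = 0.
    apply: zero_by_functionals => phi.
    have [Fu FuE] := evX u; have [Fv FvE] := evX v; have [G GE] := phX phi.
    move: (key Fu G Fv); rewrite /Rhs (fAev _ _ FuE) (fAev _ _ FvE) (fAph _ _ GE).
    rewrite (uvec_ev _ _ FuE) (uvec_ev _ _ FvE) sub0r addr0 => /eqP.
    rewrite oppr_eq0 => /eqP H; exact: H.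
  have HDs u v : Ds T succ ls rs u v = 0.
    apply: zero_by_functionals => phi.
    have [Fu FuE] := evX u; have [Fv FvE] := evX v; have [G GE] := phX phi.
    move: (key G Fu Fv); rewrite /Rhs (fAev _ _ FuE) (fAev _ _ FvE) (fAph _ _ GE).
    rewrite (uvec_ev _ _ FuE) (uvec_ev _ _ FvE) HDp addr0 subr0 addr0 => H; exact: H.
  split => u v; apply/eqP; rewrite -subr_eq0; apply/eqP.
  + have := HDs u v; rewrite /Ds => H; exact: H.
  + have := HDp u v; rewrite /Dp => H; exact: H.
- move=> [O1 O2] f g h.
  have D1 u v : Ds T succ ls rs u v = 0 by rewrite /Ds O1 subrr.
  have D2 u v : Dp T prec lp rp u v = 0 by rewrite /Dp O2 subrr.
  by rewrite /Rhs !D1 !D2 !addr0 !fA0 subrr addr0.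
Qed.
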